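(* Let $r\in(0,1)$, let $\vec x=(x_n)_{n\in\mathbb{N}}$ be a complex sequence, and let $L\in\mathbb{C}$. If $\lim_{N\to\infty}\mathbb{E}^{\mathrm{Bin}(r)}_{n\le N}(\vec x)=L$, then $\lim_{N\to\infty}\mathbb{E}^{\mathrm{Bin}(r)}_{n\le N}(T\vec x)=L$. Consequently, for every $k\in\mathbb{N}$, $\lim_{N\to\infty}\mathbb{E}^{\mathrm{Bin}(r)}_{n\le N}(T^k\vec x)=L$.
   Context: $\mathbb{N}=\{0,1,2,\dots\}$. For $r\in(0,1)$, a complex sequence $\vec y=(y_n)_{n\in\mathbb{N}}$ and $N\in\mathbb{N}$, $\mathbb{E}^{\mathrm{Bin}(r)}_{n\le N}(\vec y)=\sum_{n=0}^{N}\binom{N}{n}r^n(1-r)^{N-n}y_n$. $T$ is the right-shift operator: $T(y_0,y_1,y_2,\dots)=(0,y_0,y_1,\dots)$, so $(T^k\vec y)_n=y_{n-k}$ for $n\ge k$ and $0$ for $n<k$. *)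

(* Defs.v *)
From HB Require Import structures.
From mathcomp Require Import all_boot all_order all_algebra.
From mathcomp Require Import complex.
From mathcomp Require Import all_classical all_reals all_analysis.
Set Implicit Arguments. Unset Strict Implicit. Unset Printing Implicit Defensive.
Import Order.TTheory GRing.Theory Num.Theory.
Import numFieldTopology.Exports numFieldNormedType.Exports.
Local Open Scope ring_scope.
Local Open Scope complex_scope.

Definition Cplx (R : realType) : numClosedFieldType := R[i].

Definition binomExp (R : realType) (r : R) (y : nat -> Cplx R) (N : nat) : Cplx R :=
  \sum_(n < N.+1) ((('C(N, n))%:R * r ^+ n * (1 - r) ^+ (N - n))%:C * y n).

Definition shiftT (R : realType) (y : nat -> Cplx R) : nat -> Cplx R :=
  fun n => match n with 0%N => 0 | m.+1 => y m end.

(* Main.v *)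
Require Import Defs.
From HB Require Import structures.
From mathcomp Require Import all_boot all_order all_algebra.
From mathcomp Require Import complex.
From mathcomp Require Import all_classical all_reals all_analysis.
From mathcomp Require Import ring.
Import Order.TTheory GRing.Theory Num.Theory.
Import numFieldTopology.Exports numFieldNormedType.Exports.
Local Open Scope ring_scope.
Local Open Scope classical_set_scope.
Local Open Scope complex_scope.
Lemma rec_cvg (K : numFieldType) (c : K) (a y : nat -> K) (L : K):
 0 < c -> c <= 1 -> (fun k => (1-c)^+k) @ \oo --> 0 ->
 (forall N, y N.+1 = c * a N + (1-c) * y N) -> a @ \oo --> L -> y @ \oo --> L.
Proof.
move=> c0 c1 hq hrec /cvgrPdist_le ha; apply/cvgrPdist_le => e e0.
have e20 : 0 < e/2 by rewrite divr_gt0.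
have q0 : 0 <= 1 - c by rewrite subr_ge0.
have [N _ HN] := ha _ e20.
set D := `|L - y N|.
have key : forall k, `|L - y (k + N)%N| <= (1-c)^+k * D + e/2.
  elim=> [|k IH]; first by rewrite expr0 mul1r add0n lerDl ltW.
  rewrite addSn hrec.
  have -> : L - (c * a (k+N)%N + (1-c) * y (k+N)%N) = c * (L - a (k+N)%N) + (1-c)*(L - y (k+N)%N) by ring.
  apply: (le_trans (ler_normD _ _)); rewrite !normrM (gtr0_norm c0) (ger0_norm q0).
  apply: le_trans (lerD (ler_wpM2l (ltW c0) (HN _ (leq_addl k N))) (ler_wpM2l q0 IH)) _.
  by rewrite exprS le_eqVlt; apply/orP; left; apply/eqP; ring.
have hqD : (fun k => (1-c)^+k * D) @ \oo --> 0.
  by rewrite -(mul0r D); apply: cvgMl.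
move/cvgrPdist_le: hqD => /(_ _ e20) [M _ HM].
exists (M + N)%N => // n /= hn.
rewrite -(subnK (leq_trans (leq_addl M N) hn)).
apply: le_trans (key _) _.
rewrite [leRHS](splitr e) lerD2r.
have := HM (n - N)%N; rewrite sub0r normrN ger0_norm; last first.
  by rewrite mulr_ge0 ?exprn_ge0 ?normr_ge0.
apply => /=; rewrite leq_subRL ?(leq_trans (leq_addl M N) hn) //.
by rewrite addnC.
Qed.

Lemma coefR (R : realType) (r : R) (N i : nat) : (i <= N)%N ->
  ('C(N.+1, i.+1))%:R * r ^+ i.+1 * (1 - r) ^+ (N.+1 - i.+1) =
  r * (('C(N, i))%:R * r ^+ i * (1 - r) ^+ (N - i)) +
  (1 - r) * (('C(N, i.+1))%:R * r ^+ i.+1 * (1 - r) ^+ (N - i.+1)).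
Proof.
move=> hi; rewrite subSS binS natrD.
case: (ltnP i N) => h.
  rewrite -(subnSK h) !exprS; ring.
have -> : i = N by apply/eqP; rewrite eqn_leq hi h.
by rewrite bin_small // subnn !mul0r mulr0 addr0 !exprS; ring.
Qed.

Lemma binom_rec (R : realType) (r : R) (x : nat -> Cplx R) N :
  binomExp r (shiftT x) N.+1 =
  r%:C * binomExp r x N + (1 - r)%:C * binomExp r (shiftT x) N.
Proof.
have Z : forall z : Cplx R, z * 0 = 0 by move=> z; rewrite mulr0.
rewrite /binomExp big_ord_recl /= Z add0r.
rewrite [X in _ + _ * X]big_ord_recl /= Z add0r.
under eq_bigr => i _ do rewrite /bump leq0n add1n add0n.
under [X in _ + _ * X]eq_bigr => i _ do rewrite /bump leq0n add1n /=.
rewrite [X in _ + _ * X](_ : _ =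
   \sum_(i < N.+1) (('C(N, i.+1))%:R * r ^+ i.+1 * (1 - r) ^+ (N - i.+1))%:C * x i).
  rewrite !mulr_sumr -big_split /=; apply: eq_bigr => i _.
  rewrite coefR; last by rewrite -ltnS.
  by rewrite rmorphD !rmorphM /= mulrDl !mulrA.
rewrite [RHS]big_ord_recr /= bin_small // !mul0r.
by rewrite addr0.
Qed.

Lemma decay (R : realType) (r : R) : 0 < r < 1 ->
  (fun k => (1 - r%:C)^+k : Cplx R) @ \oo --> 0.
Proof.
move=> /andP[r0 r1].
have q0 : 0 <= 1 - r by rewrite subr_ge0 ltW.
have hR : (fun k => (1 - r)^+k) @ \oo --> (0:R).
  apply: cvg_expr; rewrite ger0_norm // ltrBlDr ltrDl //.
apply/cvgrPdist_le => e e0.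
have er : e \is Num.real by apply: gtr0_real.
move/cvgrPdist_le: hR => /(_ (@complex.Re R e)).
rewrite -ltcR RRe_real // => /(_ e0) [M _ HM].
exists M => // n /= hn.
have := HM n hn; rewrite /= sub0r normrN ger0_norm ?exprn_ge0 // => h.
rewrite sub0r normrN -(rmorph1 (real_complex R)) -rmorphB -rmorphXn /=.
rewrite ger0_norm ?ler0c ?exprn_ge0 // -(RRe_real er) lecR //.
Qed.

Theorem mainTheorem6 (R : realType) (r : R) (x : nat -> Cplx R) (L : Cplx R) :
  (0 < r < 1)%R ->
  binomExp r x @ \oo --> L ->
  binomExp r (shiftT x) @ \oo --> L /\
  (forall k : nat, binomExp r (iter k (@shiftT R) x) @ \oo --> L).
Proof.
move=> hr.
have step : forall y : nat -> Cplx R, binomExp r y @ \oo --> L ->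
    binomExp r (shiftT y) @ \oo --> L.
  move=> y hy; case/andP: hr => r0 r1.
  apply: (@rec_cvg _ (r%:C) (binomExp r y)).
  - by rewrite ltcR.
  - by rewrite lecR ltW.
  - by apply: decay; rewrite r0.
  - by move=> N; rewrite binom_rec rmorphB rmorph1.
  - by [].
move=> hx; split; first exact: step.
by elim=> [|k IH] //=; apply: step.
Qed.
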